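(* Let $k\ge2$, $d\ge1$, and let $\lambda$ be a partition of $k$. Then $f_\lambda(X_1,\dots,X_{k-1})$ is positive semidefinite whenever $X_1,\dots,X_{k-1}$ are positive semidefinite complex $d\times d$ matrices.
   Context: $S_k$ acts on $(\mathbb{C}^d)^{\otimes k}$ via $T(\pi)\,|v_1\rangle\otimes\cdots\otimes|v_k\rangle=|v_{\pi^{-1}(1)}\rangle\otimes\cdots\otimes|v_{\pi^{-1}(k)}\rangle$. For a partition $\lambda$ of $k$ with irreducible character $\chi_\lambda$ of $S_k$, the central Young projector is $P_\lambda=\frac{\chi_\lambda(e)}{k!}\sum_{\pi\in S_k}\chi_\lambda(\pi^{-1})T(\pi)$ ($e$ the identity permutation). The polarized Cayley–Hamilton map $f_\lambda$ on $(k-1)$-tuples of complex $d\times d$ matrices is $f_\lambda(X_1,\dots,X_{k-1})=\operatorname{tr}_{1\dots k\setminus k}[P_\lambda(X_1\otimes\cdots\otimes X_{k-1}\otimes\mathbb{1})]$, where the partial trace is over the first $k-1$ tensor factors. *)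

(* Defs.v *)
(* Complex numbers: C := R[i] (mathcomp-real-closed) for an
   arbitrary R : realType (so C is the field of complex numbers). *)
From HB Require Import structures.
From mathcomp Require Import all_boot all_order all_algebra all_fingroup.
From mathcomp Require Import mxrepresentation spectral.
From mathcomp Require Import complex.
From mathcomp Require Import reals.

Set Implicit Arguments.
Unset Strict Implicit.
Unset Printing Implicit Defensive.

Import Order.TTheory GRing.Theory Num.Theory.
Local Open Scope ring_scope.

Section Defs.
Variable C : numClosedFieldType.

Definition psdmx (n : nat) (A : 'M[C]_n) : Prop :=
  map_mx Num.conj A^T = A /\
  forall v : 'rV[C]_n, 0 <= (v *m A *m (map_mx Num.conj v^T)) 0 0.

Definition is_irr_char (k : nat) (chi : 'S_k -> C) : Prop :=
  exists n (rG : mx_representation C [set: 'S_k]%G n),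
    mx_irreducible rG /\ forall p : 'S_k, chi p = \tr (rG p).

Variables k d : nat.

(* Basis of (C^d)^{\otimes k}: |e_{i 0}> (x) ... (x) |e_{i (k-1)}>,
   indexed by i : 'I_k -> 'I_d.  Operators are given by their matrix entries
   <e_i| A |e_j>, as functions idx -> idx -> C. *)
Definition idx := {ffun 'I_k -> 'I_d}.

(* T(pi) |v_1 .. v_k> = |v_{pi^-1 1} .. v_{pi^-1 k}> ; on basis vectors
   T(pi)|e_j> = |e_i> with i m = j (pi^-1 m). *)
Definition Tperm (p : 'S_k) (i j : idx) : C :=
  ([forall m : 'I_k, i m == j ((p^-1)%g m)] : bool)%:R.

Definition Pyoung (chi : 'S_k -> C) (i j : idx) : C :=
  chi 1%g / (k`!)%:R * \sum_(p : 'S_k) chi (p^-1)%g * Tperm p i j.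

(* X_1 (x) ... (x) X_{k-1} (x) 1, with X_{m+1} = nth 0 X m. *)
Definition tensX (X : seq 'M[C]_d) (i j : idx) : C :=
  \prod_(m : 'I_k)
     (if (val m < k.-1)%N then (nth 0 X m) (i m) (j m)
      else ((i m == j m) : bool)%:R).

(* f_lambda(X_1..X_{k-1}) = tr_{1..k-1}[ P (X_1 (x) .. (x) X_{k-1} (x) 1) ]:
   partial trace over the first k-1 tensor factors. *)
Definition f_lambda (chi : 'S_k -> C) (X : seq 'M[C]_d) : 'M[C]_d :=
  \matrix_(a, b)
    \sum_(i : idx) \sum_(j : idx)
      (if [&& [forall m : 'I_k, (val m < k.-1)%N ==> (i m == j m)],
              [forall m : 'I_k, (val m == k.-1) ==> (i m == a)] &
              [forall m : 'I_k, (val m == k.-1) ==> (j m == b)]]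
       then \sum_(l : idx) Pyoung chi i l * tensX X l j
       else 0).

End Defs.

(* Main.v *)
Require Import Defs.
From HB Require Import structures.
From mathcomp Require Import all_boot all_order all_algebra all_fingroup.
From mathcomp Require Import mxrepresentation spectral.
From mathcomp Require Import complex.
From mathcomp Require Import reals.
From mathcomp Require Import ring.
Set Implicit Arguments.
Unset Strict Implicit.
Unset Printing Implicit Defensive.
Import Order.TTheory GRing.Theory Num.Theory.
Local Open Scope ring_scope.


Section Char.
Variables (C : numClosedFieldType) (gT : finGroupType) (n : nat).
Variable rG : mx_representation C [set: gT]%G n.
Hypothesis irrG : mx_irreducible rG.

Let rGM g h : rG (g * h)%g = rG g *m rG h.
Proof. by rewrite repr_mxM ?inE. Qed.

Lemma n_gt0 : (0 < n)%N.
Proof. by case/mx_irrP: irrG. Qed.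

Lemma n_neq0 : (n%:R : C) != 0.
Proof. by rewrite pnatr_eq0 -lt0n n_gt0. Qed.

Lemma schur_orth (a b c e : 'I_n) :
  \sum_(g : gT) rG g^-1%g a b * rG g c e =
  (#|gT|%:R / n%:R) * ((a == e) && (b == c))%:R.
Proof.
pose M : 'M[C]_n := delta_mx b c.
pose S := \sum_(g : gT) rG g^-1%g *m M *m rG g.
have cS : centgmx rG S.
  apply/centgmxP => h _.
  rewrite /S mulmx_suml mulmx_sumr; symmetry.
  rewrite (reindex (fun g => (g * h)%g)) /=; last first.
    by exists (fun g => (g * h^-1)%g) => g _; rewrite ?mulgK ?mulgKV.
  apply: eq_bigr => g _.
  by rewrite invMg !rGM !mulmxA -rGM mulgV repr_mx1 mul1mx.
have absG := group_closure_closed_field (F := C) irrG.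
have /is_scalar_mxP [s Ss] := mx_abs_irr_cent_scalar absG cS.
have trS : \tr S = #|gT|%:R * (b == c)%:R.
  rewrite /S raddf_sum /=.
  rewrite (eq_bigr (fun _ => (b == c)%:R)); last first.
    move=> g _; rewrite mxtrace_mulC mulmxA -rGM mulgV repr_mx1 mul1mx.
    rewrite /M /mxtrace (bigD1 b) //= big1 ?addr0 ?mxE ?eqxx //.
    by move=> i /negbTE ni; rewrite mxE ni.
  by rewrite sumr_const mulr_natl.
have sE : s = #|gT|%:R / n%:R * (b == c)%:R.
  move: trS; rewrite Ss mxtrace_scalar => trS.
  apply: (mulIf n_neq0).
  by rewrite [LHS]mulr_natr trS [RHS]mulrAC divfK ?n_neq0.
transitivity (S a e); last first.
  by rewrite Ss mxE sE; case: (a == e); case: (b == c); rewrite /= ?mulr1 ?mulr0 ?mulr1n ?mulr0n.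
rewrite /S summxE; apply: eq_bigr => g _.
rewrite mxE (bigD1 c) //= big1 ?addr0; last first.
  move=> j /negbTE nj; rewrite mxE big1 ?mul0r // => l _.
  by rewrite /M mxE nj andbF mulr0.
rewrite mxE (bigD1 b) //= big1 ?addr0 /M ?mxE ?eqxx ?mulr1 //.
by move=> l /negbTE nl; rewrite mxE nl /= mulr0.
Qed.

Definition chiG (g : gT) := \tr (rG g).

Lemma chi_orth y :
  \sum_(g : gT) chiG g^-1%g * chiG (g * y)%g = #|gT|%:R / n%:R * chiG y.
Proof.
rewrite /chiG.
transitivity (\sum_(g : gT) \sum_(a < n) \sum_(c < n) \sum_(e < n)
    rG g^-1%g a a * rG g c e * rG y e c).
  apply: eq_bigr => g _; rewrite /mxtrace big_distrl /=; apply: eq_bigr => a _.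
  rewrite big_distrr /=; apply: eq_bigr => c _.
  rewrite rGM mxE big_distrr /=; apply: eq_bigr => e _.
  by rewrite mulrA.
rewrite exchange_big /=.
rewrite /mxtrace big_distrr /=; apply: eq_bigr => a _.
rewrite exchange_big /= (bigD1 a) //= [X in _ + X = _]big1 ?addr0; last first.
  move=> c /negbTE nc; rewrite exchange_big /= big1 // => e _.
  rewrite -big_distrl /= schur_orth.
  have -> : (a == c) = false by rewrite eq_sym.
  by rewrite andbF mulr0 mul0r.
rewrite exchange_big /= (bigD1 a) //= [X in _ + X = _]big1 ?addr0; last first.
  move=> e /negbTE ne; rewrite -big_distrl /= schur_orth eq_sym ne /=.
  by rewrite mulr0 mul0r.
by rewrite -big_distrl /= schur_orth !eqxx mulr1.
Qed.

Lemma chi1 : chiG 1%g = n%:R.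
Proof. by rewrite /chiG repr_mx1 mxtrace1. Qed.


Definition ct m p (A : 'M[C]_(m, p)) : 'M[C]_(p, m) := map_mx Num.conj A^T.

Lemma ctM m p q (A : 'M[C]_(m, p)) (B : 'M[C]_(p, q)) : ct (A *m B) = ct B *m ct A.
Proof. by rewrite /ct trmx_mul map_mxM. Qed.

Lemma tr_ct m (A : 'M[C]_m) : \tr (ct A) = (\tr A)^*.
Proof. by rewrite /mxtrace rmorph_sum; apply: eq_bigr => i _; rewrite !mxE. Qed.

Lemma ct_form m (w : 'rV[C]_m) : (w *m ct w) 0 0 = \sum_j `|w 0 j| ^+ 2.
Proof. by rewrite mxE; apply: eq_bigr => j _; rewrite normCK !mxE. Qed.

Lemma chi_conj g : (chiG g)^* = chiG g^-1%g.
Proof.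
pose H := \sum_(g : gT) rG g *m ct (rG g).
have inv h : rG h *m H *m ct (rG h) = H.
  rewrite /H mulmx_sumr mulmx_suml.
  rewrite [RHS](reindex (fun g => (h * g)%g)) /=; last first.
    by exists (fun g => (h^-1 * g)%g) => x _; rewrite ?mulKg ?mulKVg.
  by apply: eq_bigr => x _; rewrite rGM ctM !mulmxA.
have sq A (v : 'rV[C]_n) : v *m (A *m ct A) *m ct v = (v *m A) *m ct (v *m A).
  by rewrite ctM !mulmxA.
have Hu : H \in unitmx.
  rewrite unitmxE unitfE; apply/det0P => -[v nzv vH0].
  have : (v *m H *m ct v) 0 0 = 0 by rewrite vH0 mul0mx mxE.
  rewrite /H mulmx_sumr mulmx_suml summxE => H0.
  have pos x : true -> 0 <= (v *m (rG x *m ct (rG x)) *m ct v) 0 0.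
    move=> _; rewrite sq ct_form; apply: sumr_ge0 => j _.
    exact: exprn_ge0.
  have := psumr_eq0P pos H0 (i := 1%g) isT.
  rewrite sq repr_mx1 mulmx1 ct_form => {}H0.
  move/negP: nzv; apply; apply/eqP/rowP => j.
  have /psumr_eq0P Hj := H0; rewrite mxE.
  have := Hj (fun j _ => exprn_ge0 2 (normr_ge0 (v 0 j))) j isT.
  by move/eqP; rewrite expf_eq0 /= normr_eq0 => /eqP.
have rGu := repr_mx_unit rG (in_setT g).
have E1 : H *m ct (rG g) = invmx (rG g) *m H.
  by rewrite -[LHS](mulKmx rGu) [rG g *m _]mulmxA inv.
have E2 : ct (rG g) = invmx H *m (invmx (rG g) *m H).
  by rewrite -E1 mulKmx.
rewrite /chiG -tr_ct E2 mxtrace_mulC -mulmxA mulmxV // mulmx1.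
by rewrite repr_mxV ?inE.
Qed.

End Char.


Section Young.
Variables (C : numClosedFieldType) (k d : nat) (chi : 'S_k -> C).
Hypothesis horth : forall y : 'S_k,
  \sum_(g : 'S_k) chi g^-1%g * chi (g * y)%g = (k`!)%:R / chi 1%g * chi y.
Hypothesis hconj : forall g, (chi g)^* = chi g^-1%g.
Hypothesis h1 : chi 1%g != 0.

Definition ip (i : idx k d) (p : 'S_k) : idx k d := [ffun m => i (p m)].

Lemma ipM i p q : ip (ip i p) q = ip i (q * p)%g.
Proof. by apply/ffunP => m; rewrite !ffunE permM. Qed.

Lemma ipV i l p : (i == ip l p) = (l == ip i p^-1%g).
Proof.
apply/eqP/eqP => [-> | ->]; apply/ffunP => m; rewrite !ffunE.
  by rewrite permKV.
by rewrite permK.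
Qed.

Lemma TpermE p i l : Tperm C p i l = (l == ip i p)%:R.
Proof.
rewrite /Tperm; congr ((nat_of_bool _)%:R); apply/forallP/eqP => [H | ->].
  apply/ffunP => m; rewrite ffunE; move/eqP: (H (p m)); rewrite permK.
  by move->.
by move=> m; rewrite ffunE permKV.
Qed.

Let c : C := chi 1%g / (k`!)%:R.

Lemma PyE i j : Pyoung chi i j = c * \sum_(p : 'S_k) chi p^-1%g * (j == ip i p)%:R.
Proof. by rewrite /Pyoung; congr (_ * _); apply: eq_bigr => p _; rewrite TpermE. Qed.

Lemma sumP i (F : idx k d -> C) :
  \sum_l Pyoung chi i l * F l = c * \sum_(p : 'S_k) chi p^-1%g * F (ip i p).
Proof.
under eq_bigr => l _ do rewrite PyE -mulrA big_distrl /=.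
rewrite -big_distrr /=; congr (_ * _).
rewrite exchange_big /=; apply: eq_bigr => p _.
rewrite (bigD1 (ip i p)) //= big1 ?addr0; first by rewrite eqxx mulr1.
by move=> l /negbTE nl; rewrite nl mulr0 mul0r.
Qed.

Lemma kfact_neq0 : ((k`!)%:R : C) != 0.
Proof. by rewrite pnatr_eq0 -lt0n fact_gt0. Qed.

Lemma P_idem (i j : idx k d) : \sum_(l : idx k d) Pyoung chi i l * Pyoung chi l j = Pyoung chi i j.
Proof.
rewrite sumP.
under eq_bigr => p _ do rewrite PyE mulrCA big_distrr /=.
rewrite (eq_bigr (fun p => c * \sum_(x : 'S_k) chi p^-1%g * chi (p * x^-1)%g * (j == ip i x)%:R)); last first.
  move=> p _; congr (_ * _).
  rewrite (reindex (fun x => (x * p^-1)%g)) /=; last first.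
    by exists (fun x => (x * p)%g) => x _; rewrite ?mulgK ?mulgKV.
  apply: eq_bigr => x _; rewrite ipM mulgKV invMg invgK mulrA.
  by [].
rewrite -big_distrr /= mulrA exchange_big /= PyE.
set cc := c * c.
rewrite (eq_bigr (fun x => (k`!)%:R / chi 1%g * chi x^-1%g * (j == ip i x)%:R)); last first.
  by move=> x _; rewrite -big_distrl /= horth.
rewrite /cc -mulrA; congr (_ * _); rewrite big_distrr /=; apply: eq_bigr => x _.
by rewrite /c !mulrA divfK ?kfact_neq0 // mulfV // mul1r.
Qed.

Lemma c_real : c^* = c.
Proof.
rewrite /c rmorphM /= fmorphV /= rmorph_nat hconj invg1.
by [].
Qed.

Lemma P_herm (i l : idx k d) : (Pyoung chi l i)^* = Pyoung chi i l.
Proof.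
rewrite !PyE rmorphM /= c_real rmorph_sum /=; congr (_ * _).
rewrite [RHS](reindex (fun p => p^-1%g)) /=; last first.
  by exists (fun p => p^-1%g) => p _; rewrite invgK.
apply: eq_bigr => p _; rewrite rmorphM /= rmorph_nat hconj invgK.
by rewrite ipV.
Qed.

Lemma P_psd (w : idx k d -> C) :
  0 <= \sum_(i : idx k d) \sum_(l : idx k d) w i * Pyoung chi i l * (w l)^*.
Proof.
have -> : \sum_(i : idx k d) \sum_(l : idx k d) w i * Pyoung chi i l * (w l)^* =
    \sum_(m : idx k d) `|\sum_(i : idx k d) w i * Pyoung chi i m| ^+ 2.
  transitivity (\sum_(i : idx k d) \sum_(l : idx k d) \sum_(m : idx k d)
     w i * (Pyoung chi i m * Pyoung chi m l) * (w l)^*).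
    apply: eq_bigr => i _; apply: eq_bigr => l _.
    by rewrite -big_distrl -big_distrr /= P_idem.
  rewrite [RHS](eq_bigr (fun m => \sum_(i : idx k d) \sum_(l : idx k d)
     w i * (Pyoung chi i m * Pyoung chi m l) * (w l)^*)); last first.
    move=> m _; rewrite normCK rmorph_sum big_distrl /=; apply: eq_bigr => i _.
    rewrite big_distrr /=; apply: eq_bigr => l _.
    rewrite rmorphM /= P_herm.
    ring.
  rewrite [RHS]exchange_big; apply: eq_bigr => i _.
  by rewrite [RHS]exchange_big.
by apply: sumr_ge0 => m _; apply: exprn_ge0; apply: normr_ge0.
Qed.

End Young.


Section Fac.
Variable C : numClosedFieldType.
Local Notation ct A := (map_mx (@Num.conj C) (trmx A)).

Lemma ctM' m p q (A : 'M[C]_(m, p)) (B : 'M[C]_(p, q)) : ct (A *m B) = ct B *m ct A.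
Proof. by rewrite trmx_mul map_mxM. Qed.

Lemma ee_entry n (s : 'I_n) : (('e_s : 'rV[C]_n) *m ct ('e_s : 'rV[C]_n)) 0 0 = 1.
Proof.
rewrite mxE (bigD1 s) //= big1 ?addr0 ?mxE ?eqxx /= ?rmorph1 ?mulr1 //.
by move=> j /negbTE nj; rewrite !mxE nj /= mul0r.
Qed.

Lemma psd_diag_ge0 n (X : 'M[C]_n) : psdmx X -> forall s, 0 <= spectral_diag X 0 s.
Proof.
case=> herm pos s.
have nX : X \is normalmx by rewrite qualifE herm.
have /orthomx_spectralP XE := nX.
move: XE; set U := spectralmx X; set D := spectral_diag X => XE.
have Uu : U *m ct U = 1%:M by apply/unitarymxP/spectral_unitarymx.
rewrite invmx_unitary ?spectral_unitarymx // in XE.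
have := pos ('e_s *m U).
have -> : ('e_s : 'rV[C]_n) *m U *m X *m ct (('e_s : 'rV[C]_n) *m U) =
    ('e_s : 'rV[C]_n) *m diag_mx D *m ct ('e_s : 'rV[C]_n).
  rewrite {1}XE ctM' !mulmxA -(mulmxA 'e_s U) Uu mulmx1.
  by rewrite -(mulmxA _ U) Uu mulmx1.
by rewrite -rowE row_diag_mx -scalemxAl mxE ee_entry mulr1.
Qed.

Definition Bfac n (X : 'M[C]_n) : 'M[C]_n :=
  \matrix_(s, j) (sqrtC (spectral_diag X 0 s) * spectralmx X s j).

Lemma Bfac_E n (X : 'M[C]_n) : psdmx X ->
  forall l j, X l j = \sum_s (Bfac X s l)^* * Bfac X s j.
Proof.
move=> psdX l j; have D0 := psd_diag_ge0 psdX.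
case: psdX => herm _.
have nX : X \is normalmx by rewrite qualifE herm.
have /orthomx_spectralP XE := nX.
move: XE D0; set U := spectralmx X; set D := spectral_diag X => XE D0.
rewrite invmx_unitary ?spectral_unitarymx // in XE.
rewrite {1}XE mxE; apply: eq_bigr => s _.
rewrite !mxE (bigD1 s) //= big1 ?addr0; last first.
  by move=> t /negbTE nt; rewrite !mxE nt mulr0n mulr0.
rewrite !mxE eqxx mulr1n -/U -/D rmorphM /= [(sqrtC _)^*]geC0_conj ?sqrtC_ge0 //.
rewrite -{1}(sqrtCK (D 0 s)); ring.
Qed.


Lemma pos_herm n (A : 'M[C]_n) :
  (forall v : 'rV[C]_n, 0 <= (v *m A *m ct v) 0 0) -> ct A = A.
Proof.
move=> pos.
pose bf (u w : 'rV[C]_n) := (u *m A *m ct w) 0 0.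
have bfDl u1 u2 w : bf (u1 + u2) w = bf u1 w + bf u2 w.
  by rewrite /bf !mulmxDl mxE.
have bfDr u w1 w2 : bf u (w1 + w2) = bf u w1 + bf u w2.
  by rewrite /bf raddfD /= map_mxD mulmxDr mxE.
have bfZl z u w : bf (z *: u) w = z * bf u w.
  by rewrite /bf -!scalemxAl mxE.
have bfZr z u w : bf u (z *: w) = z^* * bf u w.
  by rewrite /bf linearZ /= map_mxZ -scalemxAr mxE.
have bfe a b : bf 'e_a 'e_b = A a b.
  rewrite /bf -rowE mxE (bigD1 b) //= big1 ?addr0 ?mxE ?eqxx /= ?rmorph1 ?mulr1 //.
  by move=> j /negbTE nj; rewrite !mxE nj /= rmorph0 mulr0.
have re v : (bf v v)^* = bf v v by apply: geC0_conj; apply: pos.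
apply/matrixP => a b; rewrite !mxE.
have haa := re 'e_a; have hbb := re 'e_b.
pose q1 := bf ('e_a + 'e_b) ('e_a + 'e_b).
pose q2 := bf ('e_a + 'i *: 'e_b) ('e_a + 'i *: 'e_b).
have e : 2%:R * ((A b a)^* - A a b) =
   (q1^* - q1) + 'i * (q2^* - q2)
   - ('i ^+ 2 + 1) * ((A a b)^* - (A b a)^* + A a b - A b a).
  rewrite /q1 /q2 !bfDl !bfDr !bfZl !bfZr !bfe in haa hbb *.
  rewrite !rmorphD !rmorphM /= ?rmorphN /= ?conjCi ?rmorphN /= ?conjCi ?conjCK ?opprK haa hbb.
  ring.
move: e; rewrite /q1 /q2 !re !subrr mulr0 addr0 sqrCi addNr mul0r subr0.
move/eqP; rewrite mulf_eq0 pnatr_eq0 /= subr_eq0 => /eqP.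
by [].
Qed.
End Fac.


Section Main.
Variables (C : numClosedFieldType) (k d : nat) (chi : 'S_k -> C).
Variable X : seq 'M[C]_d.
Hypothesis k2 : (2 <= k)%N.
Hypothesis d1 : (0 < d)%N.
Hypothesis horth : forall y : 'S_k,
  \sum_(g : 'S_k) chi g^-1%g * chi (g * y)%g = (k`!)%:R / chi 1%g * chi y.
Hypothesis hconj : forall g, (chi g)^* = chi g^-1%g.
Hypothesis h1 : chi 1%g != 0.
Hypothesis psdX : forall m, (m < k.-1)%N -> psdmx (nth 0 X m).

Local Notation ct A := (map_mx (@Num.conj C) (trmx A)).
Local Notation P := (Pyoung chi).

Let lastP : (k.-1 < k)%N.
Proof. by case: k k2. Qed.
Let last : 'I_k := Ordinal lastP.
Let t0 : 'I_d := Ordinal d1.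

Let agree (i j : idx k d) := [forall m : 'I_k, (val m < k.-1)%N ==> (i m == j m)].

Lemma last_cond (i : idx k d) a :
  [forall m : 'I_k, (val m == k.-1) ==> (i m == a)] = (i last == a).
Proof.
apply/forallP/eqP => [H | <- m]; first by apply/eqP; move/implyP: (H last); apply; rewrite /= eqxx.
apply/implyP => /eqP hm; suff -> : m = last by [].
by apply/val_inj.
Qed.

Let notlast (m : 'I_k) : (val m < k.-1)%N = (m != last).
Proof.
have hm := ltn_ord m; rewrite -val_eqE /=.
move: (nat_of_ord m) hm => x hx.
rewrite -(ltn_predK k2) ltnS in hx.
by rewrite ltn_neqAle hx andbT.
Qed.

Definition mix (i l : idx k d) : idx k d :=
  [ffun m => if (val m < k.-1)%N then i m else l m].

Lemma mix_eq (i l j : idx k d) :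
  agree i j && (j last == l last) = (j == mix i l).
Proof.
apply/andP/eqP => [[/forallP ag /eqP jl] | ->].
  apply/ffunP => m; rewrite ffunE; case: ifP => hm.
    by have /implyP/(_ hm)/eqP := ag m.
  move: hm; rewrite notlast => /negbFE/eqP ->; by [].
split; first by apply/forallP => m; apply/implyP => hm; rewrite ffunE hm.
by rewrite ffunE notlast eqxx.
Qed.

Let Xm (m : 'I_k) := nth 0 X m.

Lemma qform_E (A : 'M[C]_d) (v : 'rV[C]_d) :
  (v *m A *m ct v) 0 0 = \sum_a \sum_b v 0 a * A a b * (v 0 b)^*.
Proof.
rewrite mxE [RHS]exchange_big /=; apply: eq_bigr => b _.
by rewrite !mxE big_distrl /=; apply: eq_bigr => a _.
Qed.

Let S (i j : idx k d) := \sum_(l : idx k d) P i l * tensX X l j.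

Lemma stepB1 (v : 'rV[C]_d) :
  (v *m f_lambda chi X *m ct v) 0 0 =
  \sum_(i : idx k d) \sum_(j : idx k d)
     (if agree i j then v 0 (i last) * S i j * (v 0 (j last))^* else 0).
Proof.
rewrite qform_E.
transitivity (\sum_a \sum_b \sum_(i : idx k d) \sum_(j : idx k d)
  v 0 a * (if [&& agree i j, [forall m : 'I_k, (val m == k.-1) ==> (i m == a)] &
              [forall m : 'I_k, (val m == k.-1) ==> (j m == b)]] then S i j else 0)
  * (v 0 b)^*).
  apply: eq_bigr => a _; apply: eq_bigr => b _.
  rewrite mxE big_distrr big_distrl /=; apply: eq_bigr => i _.
  by rewrite big_distrr big_distrl.
under eq_bigr => a _ do (rewrite exchange_big /=; under eq_bigr => i _ do rewrite exchange_big /=).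
rewrite exchange_big /=; apply: eq_bigr => i _.
rewrite exchange_big /=; apply: eq_bigr => j _.
under eq_bigr => a _ do under eq_bigr => b _ do rewrite !last_cond.
rewrite (bigD1 (i last)) //= [X in _ + X]big1 ?addr0; last first.
  move=> a /negbTE na; rewrite big1 // => b _.
  by rewrite eq_sym na andbF /= mulr0 mul0r.
rewrite (bigD1 (j last)) //= [X in _ + X]big1 ?addr0; last first.
  by move=> b /negbTE nb; rewrite eq_sym nb !andbF /= mulr0 mul0r.
by rewrite !eqxx !andbT; case: (agree i j); rewrite ?mulr0 ?mul0r.
Qed.

Lemma stepB2 (v : 'rV[C]_d) (i : idx k d) :
  \sum_(j : idx k d)
     (if agree i j then v 0 (i last) * S i j * (v 0 (j last))^* else 0) =
  \sum_(l : idx k d) v 0 (i last) * P i l * (v 0 (l last))^* *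
     \prod_(m : 'I_k) (if (val m < k.-1)%N then Xm m (l m) (i m) else 1).
Proof.
transitivity (\sum_(j : idx k d) \sum_(l : idx k d)
   (if agree i j then v 0 (i last) * (P i l * tensX X l j) * (v 0 (j last))^* else 0)).
  apply: eq_bigr => j _; case: (agree i j); last by rewrite big1.
  by rewrite /S big_distrr big_distrl.
rewrite exchange_big /=; apply: eq_bigr => l _.
have hmix := mix_eq i l (mix i l); rewrite eqxx in hmix.
case/andP: hmix => ag /eqP ml.
rewrite (bigD1 (mix i l)) //= big1 ?addr0; last first.
  move=> j nj; case agj: (agree i j) => //.
  have := mix_eq i l j; rewrite agj (negbTE nj) /= => jl.
  by rewrite /tensX (bigD1 last) //= ltnn eq_sym jl /= mul0r !mulr0 mul0r.
rewrite ag ml /=.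
have -> : tensX X l (mix i l) =
    \prod_(m : 'I_k) (if (val m < k.-1)%N then Xm m (l m) (i m) else 1).
  apply: eq_bigr => m _; rewrite ffunE /Xm; case h: (val m < k.-1)%N => //.
  by rewrite eqxx.
by rewrite mulrA [RHS]mulrAC.
Qed.

Let h (s : idx k d) (m : 'I_k) (x : idx k d) : C :=
  if (val m < k.-1)%N then Bfac (Xm m) (s m) (x m) else (s m == t0)%:R.

Lemma stepC (i l : idx k d) :
  \prod_(m : 'I_k) (if (val m < k.-1)%N then Xm m (l m) (i m) else 1) =
  \sum_(s : {ffun 'I_k -> 'I_d}) (\prod_m h s m i) * (\prod_m h s m l)^*.
Proof.
transitivity (\prod_(m : 'I_k) \sum_(t : 'I_d)
   (if (val m < k.-1)%N then (Bfac (Xm m) t (l m))^* * Bfac (Xm m) t (i m)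
    else (t == t0)%:R)).
  apply: eq_bigr => m _; case hm: (val m < k.-1)%N.
    exact: (Bfac_E (psdX hm)).
  rewrite (bigD1 t0) //= big1 ?addr0 ?eqxx //.
  by move=> t /negbTE ->.
rewrite bigA_distr_bigA /=; apply: eq_bigr => s _.
rewrite rmorph_prod -big_split /=; apply: eq_bigr => m _.
rewrite /h; case: ifP => _; first by rewrite mulrC.
by rewrite rmorph_nat; case: (s m == t0); rewrite ?mulr1 ?mulr0.
Qed.

Lemma f_pos (v : 'rV[C]_d) : 0 <= (v *m f_lambda chi X *m ct v) 0 0.
Proof.
rewrite stepB1.
under eq_bigr => i _ do rewrite stepB2.
pose W (s : idx k d) (x : idx k d) := v 0 (x last) * \prod_m h s m x.
have -> : \sum_(i : idx k d) \sum_(l : idx k d)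
     v 0 (i last) * P i l * (v 0 (l last))^* *
     \prod_(m : 'I_k) (if (val m < k.-1)%N then Xm m (l m) (i m) else 1) =
   \sum_(s : idx k d) \sum_(i : idx k d) \sum_(l : idx k d)
     W s i * P i l * (W s l)^*.
  rewrite [RHS]exchange_big /=; apply: eq_bigr => i _.
  rewrite [RHS]exchange_big /=; apply: eq_bigr => l _.
  rewrite stepC big_distrr /=; apply: eq_bigr => s _.
  rewrite /W rmorphM /=; ring.
by apply: sumr_ge0 => s _; apply: (P_psd horth hconj h1).
Qed.

End Main.


Theorem theorem3 (R : realType) (k d : nat) :
  (2 <= k)%N -> (1 <= d)%N ->
  forall chi : 'S_k -> R[i], is_irr_char chi ->
  forall X : (k.-1).-tuple 'M[R[i]]_d,
    (forall l : 'I_k.-1, psdmx (tnth X l)) ->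
    psdmx (f_lambda chi X).
Proof.
move=> k2 d1 chi [n [rG [irr hchi]]] X psdX.
have horth y : \sum_(g : 'S_k) chi g^-1%g * chi (g * y)%g = (k`!)%:R / chi 1%g * chi y.
  under eq_bigr => g _ do rewrite !hchi.
  by rewrite !hchi (chi_orth irr y) card_Sn -(chi1 rG).
have hconj g : (chi g)^* = chi g^-1%g by rewrite !hchi; exact: chi_conj rG g.
have h1 : chi 1%g != 0 by rewrite hchi -/(chiG rG 1) chi1 (n_neq0 irr).
have psdX' m : (m < k.-1)%N -> psdmx (nth 0 (X : seq _) m).
  by move=> hm; have := psdX (Ordinal hm); rewrite (tnth_nth 0).
have pos := f_pos k2 d1 horth hconj h1 psdX'.
by split; [exact: pos_herm pos | exact: pos].
Qed.
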